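(* Let $\Gamma$ be a group and $S$ a strongly $\Gamma$-graded semigroup with local units. Then (1) $S$ is regular if and only if $S_\varepsilon$ is regular; and (2) $S$ is an inverse semigroup if and only if $S_\varepsilon$ is an inverse semigroup.
   Context: Semigroups have a zero; $S$ is $\Gamma$-graded via $\deg:S\setminus\{0\}\to\Gamma$ with $\deg(st)=\deg(s)\deg(t)$ whenever $st\neq0$; $S_\alpha=\deg^{-1}(\alpha)\cup\{0\}$, $\varepsilon$ the identity of $\Gamma$; strongly graded means $S_\alpha S_\beta=S_{\alpha\beta}$ for all $\alpha,\beta$. $S$ has local units if for each $s$ there are idempotents $u,v$ with $us=s=sv$. Regular: every $s$ has $t$ with $sts=s$. *)

(* Defs.v *)
Record Group := {
  g_car :> Type;
  g_mul : g_car -> g_car -> g_car;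
  g_one : g_car;
  g_inv : g_car -> g_car;
  g_assoc : forall a b c, g_mul a (g_mul b c) = g_mul (g_mul a b) c;
  g_mul1l : forall a, g_mul g_one a = a;
  g_mul1r : forall a, g_mul a g_one = a;
  g_mulVl : forall a, g_mul (g_inv a) a = g_one;
  g_mulVr : forall a, g_mul a (g_inv a) = g_one
}.

Record Semigroup0 := {
  s_car :> Type;
  s_mul : s_car -> s_car -> s_car;
  s_zero : s_car;
  s_assoc : forall a b c, s_mul a (s_mul b c) = s_mul (s_mul a b) c;
  s_zero_l : forall a, s_mul s_zero a = s_zero;
  s_zero_r : forall a, s_mul a s_zero = s_zero
}.

Section Defs.
Variable (G : Group) (S : Semigroup0).
Local Notation "x * y" := (s_mul S x y).

Definition idempotent (e : S) : Prop := e * e = e.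

(* deg : S\{0} -> G; represented by a total function whose value at 0 is
   irrelevant. *)
Definition is_grading (deg : S -> G) : Prop :=
  forall s t : S, s * t <> s_zero S -> deg (s * t) = g_mul G (deg s) (deg t).

Definition component (deg : S -> G) (a : G) (x : S) : Prop :=
  x = s_zero S \/ (x <> s_zero S /\ deg x = a).

Definition strongly_graded (deg : S -> G) : Prop :=
  is_grading deg /\
  forall a b : G, forall x : S,
    component deg (g_mul G a b) x <->
    exists s t, component deg a s /\ component deg b t /\ x = s * t.

Definition has_local_units : Prop :=
  forall s : S, exists u v : S, idempotent u /\ idempotent v /\ u * s = s /\ s * v = s.

(* Regularity / inverse semigroup, relative to a subsemigroup given by a
   predicate P (use P := fun _ => True for S itself). *)
Definition regular_on (P : S -> Prop) : Prop :=
  forall s, P s -> exists t, P t /\ s * t * s = s.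

Definition inverse_on (P : S -> Prop) : Prop :=
  forall s, P s -> exists t, P t /\ s * t * s = s /\ t * s * t = t /\
    forall t', P t' -> s * t' * s = s -> t' * s * t' = t' -> t' = t.

End Defs.

Definition regular_sg (S : Semigroup0) : Prop := regular_on S (fun _ => True).
Definition inverse_sg (S : Semigroup0) : Prop := inverse_on S (fun _ => True).

(* Main.v *)
Require Import Defs.
From Stdlib Require Import Classical.

Local Notation "x * y" := (s_mul _ x y).

Lemma g_cancel (G : Group) (a b c : G) : g_mul G a b = g_mul G a c -> b = c.
Proof.
  intro H. apply (f_equal (g_mul G (g_inv G a))) in H.
  rewrite !g_assoc, !g_mulVl, !g_mul1l in H. exact H.
Qed.

Ltac nrm := repeat rewrite <- s_assoc.

Lemma nz_l (S : Semigroup0) (x y : S) : x * y <> s_zero S -> x <> s_zero S.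
Proof. intros H E; apply H; subst; apply s_zero_l. Qed.
Lemma nz_r (S : Semigroup0) (x y : S) : x * y <> s_zero S -> y <> s_zero S.
Proof. intros H E; apply H; subst; apply s_zero_r. Qed.

Lemma idem_comp (G : Group) (S : Semigroup0) (deg : S -> G) (e : S) :
  is_grading G S deg -> idempotent S e -> component G S deg (g_one G) e.
Proof.
  intros Hgr He. destruct (classic (e = s_zero S)) as [H0|Hn]; [left; exact H0|].
  right; split; [exact Hn|].
  assert (Hne : e * e <> s_zero S) by (unfold idempotent in He; rewrite He; exact Hn).
  pose proof (Hgr e e Hne) as D. unfold idempotent in He. rewrite He in D.
  apply (g_cancel G (deg e)). rewrite g_mul1r. symmetry; exact D.
Qed.

Lemma comp_mul (G : Group) (S : Semigroup0) (deg : S -> G) (x y : S) :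
  is_grading G S deg -> component G S deg (g_one G) x -> component G S deg (g_one G) y ->
  component G S deg (g_one G) (x * y).
Proof.
  intros Hgr Hx Hy. destruct (classic (x * y = s_zero S)) as [H0|Hn]; [left; exact H0|].
  right; split; [exact Hn|]. rewrite (Hgr x y Hn).
  destruct Hx as [Hx|[_ Hx]]; [exfalso; exact (nz_l _ _ _ Hn Hx)|].
  destruct Hy as [Hy|[_ Hy]]; [exfalso; exact (nz_r _ _ _ Hn Hy)|].
  rewrite Hx, Hy. apply g_mul1l.
Qed.

Lemma reg_E (G : Group) (S : Semigroup0) (deg : S -> G) (s t : S) :
  is_grading G S deg -> component G S deg (g_one G) s -> s <> s_zero S ->
  s * t * s = s -> component G S deg (g_one G) t.
Proof.
  intros Hgr Hs Hn Hst. destruct Hs as [Hs|[_ Hd]]; [contradiction|].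
  assert (H1 : s * t * s <> s_zero S) by (rewrite Hst; exact Hn).
  pose proof (Hgr _ _ H1) as D. rewrite Hst in D.
  assert (H2 := nz_l _ _ _ H1).
  rewrite (Hgr _ _ H2), Hd, g_mul1l, g_mul1r in D.
  right; split; [exact (nz_r _ _ _ H2)|symmetry; exact D].
Qed.

Lemma uniq_inv (S : Semigroup0)
  (comm : forall e f : S, idempotent S e -> idempotent S f -> e * f = f * e)
  (s t t' : S) : s * t * s = s -> t * s * t = t -> s * t' * s = s -> t' * s * t' = t' -> t = t'.
Proof.
  intros H1 H2 H3 H4.
  assert (Its : idempotent S (t * s)) by (unfold idempotent; rewrite s_assoc, H2; reflexivity).
  assert (It's : idempotent S (t' * s)) by (unfold idempotent; rewrite s_assoc, H4; reflexivity).
  assert (Ist : idempotent S (s * t)) by (unfold idempotent; rewrite s_assoc, H1; reflexivity).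
  assert (Ist' : idempotent S (s * t')) by (unfold idempotent; rewrite s_assoc, H3; reflexivity).
  assert (A : t = t' * s * t).
  { transitivity (t * (s * t' * s) * t). rewrite H3; symmetry; exact H2.
    transitivity ((t * s) * (t' * s) * t). nrm; reflexivity.
    rewrite (comm _ _ Its It's).
    transitivity (t' * s * (t * s * t)). nrm; reflexivity. rewrite H2; reflexivity. }
  assert (B : t' = t' * s * t).
  { transitivity (t' * (s * t * s) * t'). rewrite H1; symmetry; exact H4.
    transitivity (t' * ((s * t) * (s * t'))). nrm; reflexivity.
    rewrite (comm _ _ Ist Ist').
    transitivity ((t' * s * t') * s * t). nrm; reflexivity. rewrite H4; reflexivity. }
  rewrite A, <- B; reflexivity.
Qed.

Theorem proposition2p13 (G : Group) (S : Semigroup0) (deg : S -> G) :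
  strongly_graded G S deg ->
  has_local_units S ->
  (regular_sg S <-> regular_on S (component G S deg (g_one G))) /\
  (inverse_sg S <-> inverse_on S (component G S deg (g_one G))).
Proof.
  intros [Hgr Hsg] Hlu.
  assert (Z0 : component G S deg (g_one G) (s_zero S)) by (left; reflexivity).
  assert (P1 : regular_sg S <-> regular_on S (component G S deg (g_one G))).
  { split.
    - intros HR s Hs. destruct (HR s I) as [t [_ Ht]].
      destruct (classic (s = s_zero S)) as [H0|Hn].
      + exists (s_zero S). split; [exact Z0|]. subst. rewrite !s_zero_l. reflexivity.
      + exists t. split; [exact (reg_E _ _ _ _ _ Hgr Hs Hn Ht)|exact Ht].
    - intros HRE s _.
      destruct (classic (s = s_zero S)) as [H0|Hn].
      + exists (s_zero S). split; [exact I|]. subst. rewrite !s_zero_l. reflexivity.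
      + destruct (Hlu s) as [u [v [Hu [_ [Hus _]]]]].
        assert (Eu := idem_comp _ _ _ _ Hgr Hu).
        set (a := deg s) in *.
        assert (Eu' : component G S deg (g_mul G a (g_inv G a)) u) by (rewrite g_mulVr; exact Eu).
        destruct (proj1 (Hsg _ _ u) Eu') as [x [b [_ [Hb Hxb]]]].
        assert (Ebs : component G S deg (g_one G) (b * s)).
        { destruct (classic (b * s = s_zero S)) as [H0|Hn']; [left; exact H0|].
          right; split; [exact Hn'|]. rewrite (Hgr _ _ Hn').
          destruct Hb as [Hb|[_ Hb]]; [exfalso; exact (nz_l _ _ _ Hn' Hb)|].
          rewrite Hb. apply g_mulVl. }
        destruct (HRE _ Ebs) as [y [_ Hy]].
        exists (y * b). split; [exact I|].
        assert (Hs' : s = x * (b * s)) by (rewrite s_assoc, <- Hxb, Hus; reflexivity).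
        rewrite Hs' at 1. nrm. repeat rewrite <- s_assoc in Hy. rewrite Hy. symmetry; exact Hs'. }
  split; [exact P1|]. split.
  - intros HI s Hs. destruct (HI s I) as [t [_ [H1 [H2 Hu]]]].
    exists t. split.
    + destruct (classic (s = s_zero S)) as [H0|Hn].
      * left. rewrite <- H2, H0, s_zero_r, s_zero_l. reflexivity.
      * exact (reg_E _ _ _ _ _ Hgr Hs Hn H1).
    + split; [exact H1|]. split; [exact H2|]. intros t' _; apply Hu; exact I.
  - intros HIE.
    assert (HR : regular_sg S).
    { apply P1. intros s Hs. destruct (HIE s Hs) as [t [Ht [H1 _]]]. exists t; auto. }
    assert (comm : forall e f : S, idempotent S e -> idempotent S f -> e * f = f * e).
    { intros e f He Hf.
      assert (Ee := idem_comp _ _ _ _ Hgr He). assert (Ef := idem_comp _ _ _ _ Hgr Hf).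
      assert (idE : forall g : S, idempotent S g -> component G S deg (g_one G) g ->
                  g * g * g = g) by (intros g Hg _; unfold idempotent in Hg; rewrite !Hg; reflexivity).
      assert (Iprod : forall e f : S, idempotent S e -> idempotent S f ->
                component G S deg (g_one G) e -> component G S deg (g_one G) f ->
                idempotent S (e * f)).
      { clear e f He Hf Ee Ef. intros e f He Hf Ee Ef.
        assert (Eef := comp_mul _ _ _ _ _ Hgr Ee Ef).
        destruct (HIE _ Eef) as [x [Ex [H1 [H2 Hu]]]].
        unfold idempotent in He, Hf.
        assert (Efxe : component G S deg (g_one G) (f * x * e)).
        { apply comp_mul; auto. apply comp_mul; auto. }
        assert (Hx : f * x * e = x).
        { apply Hu; [exact Efxe| |].
          - transitivity (e * (f * f) * x * (e * e) * f). nrm; reflexivity.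
            rewrite He, Hf. transitivity (e * f * x * (e * f)). nrm; reflexivity. exact H1.
          - transitivity (f * (x * (e * e) * (f * f) * x) * e). nrm; reflexivity.
            rewrite He, Hf.
            transitivity (f * (x * (e * f) * x) * e). nrm; reflexivity.
            rewrite H2. reflexivity. }
        assert (Ixx : idempotent S x).
        { unfold idempotent. transitivity ((f * x * e) * (f * x * e)). rewrite Hx; reflexivity.
          transitivity (f * (x * (e * f) * x) * e). nrm; reflexivity.
          rewrite H2. exact Hx. }
        destruct (HIE _ Ex) as [z [Ez [_ [_ Hz]]]].
        assert (A1 : e * f = z) by (apply Hz; auto).
        assert (A2 : x = z) by (apply Hz; auto; unfold idempotent in Ixx; rewrite !Ixx; reflexivity).
        unfold idempotent. rewrite A1, <- A2. exact Ixx. }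
      assert (Ief := Iprod e f He Hf Ee Ef).
      assert (Ife := Iprod f e Hf He Ef Ee).
      assert (Eef := comp_mul _ _ _ _ _ Hgr Ee Ef).
      assert (Efe := comp_mul _ _ _ _ _ Hgr Ef Ee).
      destruct (HIE _ Eef) as [z [Ez [_ [_ Hz]]]].
      unfold idempotent in He, Hf, Ief, Ife.
      assert (A1 : e * f = z) by (apply Hz; auto; rewrite !Ief; reflexivity).
      assert (A2 : f * e = z).
      { apply Hz; auto.
        - transitivity (e * (f * f) * (e * e) * f). nrm; reflexivity.
          rewrite He, Hf. transitivity ((e * f) * (e * f)). nrm; reflexivity. exact Ief.
        - transitivity (f * (e * e) * (f * f) * e). nrm; reflexivity.
          rewrite He, Hf. transitivity ((f * e) * (f * e)). nrm; reflexivity. exact Ife. }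
      rewrite A1, A2; reflexivity. }
    intros s _. destruct (HR s I) as [y [_ Hy]].
    exists (y * s * y). split; [exact I|].
    assert (H1 : s * (y * s * y) * s = s).
    { transitivity ((s * y * s) * y * s). nrm; reflexivity. rewrite !Hy; reflexivity. }
    assert (H2 : y * s * y * s * (y * s * y) = y * s * y).
    { transitivity (y * (s * y * s) * (y * s) * y). nrm; reflexivity.
      rewrite Hy. transitivity (y * (s * y * s) * y). nrm; reflexivity. rewrite Hy; reflexivity. }
    split; [exact H1|]. split; [exact H2|].
    intros t' _ H3 H4. symmetry. exact (uniq_inv S comm s _ _ H1 H2 H3 H4).
Qed.
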